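(* For Lebesgue almost all $x\in(0,1)$, $\lim_{n\to\infty}\frac{\log M_n(x)}{\log n}=1$.
   Context: Signed Engel expansion: define $T\colon[0,1)\to[0,1)$ by: for $k\in\mathbb{N}$, $Tx=\lceil 1/x\rceil x-1$ if $x\in(\frac{1}{2k},\frac{1}{2k-1})$; $Tx=1-\lfloor 1/x\rfloor x$ if $x\in(\frac{1}{2k+1},\frac{1}{2k})$; $Tx=0$ if $x\in\{0\}\cup\{1/n\colon n\ge 2\}$. For $x\in(0,1)$, $d_1(x)=\lceil 1/x\rceil$ if $x\in[\frac{1}{2k},\frac{1}{2k-1})$ for some $k\in\mathbb{N}$, and $d_1(x)=\lfloor 1/x\rfloor$ if $x\in[\frac{1}{2k+1},\frac{1}{2k})$ for some $k\in\mathbb{N}$; $d_{n+1}(x)=d_1(T^nx)$. For irrational $x\in(0,1)$, $R_1(x)=d_1(x)$, $R_n(x)=d_n(x)/d_{n-1}(x)$ for $n\ge2$, and $M_n(x)=\max\{R_k(x)\colon 1\le k\le n\}$. *)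

(* Defs.v *)
From HB Require Import structures.
From mathcomp Require Import all_boot all_order all_algebra.
From mathcomp Require Import all_classical all_reals all_analysis.
Set Implicit Arguments. Unset Strict Implicit. Unset Printing Implicit Defensive.
Import Order.TTheory GRing.Theory Num.Theory.
Local Open Scope ring_scope.

Section SignedEngel.
Variable R : realType.

Definition seT (x : R) : R :=
  if `[< exists k : nat, (0 < k)%N /\
        1 / (2 * k%:R) < x /\ x < 1 / (2 * k%:R - 1) >]
  then (Num.ceil (1 / x))%:~R * x - 1
  else if `[< exists k : nat, (0 < k)%N /\
        1 / (2 * k%:R + 1) < x /\ x < 1 / (2 * k%:R) >]
  then 1 - (Num.floor (1 / x))%:~R * x
  else 0.

Definition sed1 (x : R) : R :=
  if `[< exists k : nat, (0 < k)%N /\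
        1 / (2 * k%:R) <= x /\ x < 1 / (2 * k%:R - 1) >]
  then (Num.ceil (1 / x))%:~R
  else (Num.floor (1 / x))%:~R.

Definition sed (n : nat) (x : R) : R := sed1 (iter n.-1 seT x).

Definition seR (n : nat) (x : R) : R :=
  if (n <= 1)%N then sed 1 x else sed n x / sed n.-1 x.

Definition seM (n : nat) (x : R) : R :=
  \big[Num.max/0]_(1 <= k < n.+1) seR k x.


End SignedEngel.

(* Main.v *)
Require Import Defs.
From HB Require Import structures.
From mathcomp Require Import all_boot all_order all_algebra.
From mathcomp Require Import all_classical all_reals all_analysis.
From mathcomp Require Import ring lra zify.
Import Order.TTheory GRing.Theory Num.Theory numFieldNormedType.Exports.
Local Open Scope ring_scope.
Local Open Scope classical_set_scope.
Local Open Scope ereal_scope.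
Lemma series_le_bound (R : realType) (u : (\bar R)^nat) (b : \bar R) :
  (forall k, 0 <= u k) -> (forall N, \sum_(0 <= k < N) u k <= b) ->
  \sum_(0 <= k <oo) u k <= b.
Proof.
move=> u0 ub; apply: lime_le; first exact: is_cvg_nneseries.
by apply: nearW => N; exact: ub.
Qed.
Lemma leb_le (R : realType) (A B : set R) : A `<=` B ->
  (@lebesgue_measure R) A <= (@lebesgue_measure R) B.
Proof. move=> AB. have := @le_outer_measure _ _ ((wlength idfun)^*)%mu A B AB. exact. Qed.

Lemma leb_sub (R : realType) (F : (set R)^nat) :
  (@lebesgue_measure R) (\bigcup_k F k) <= \sum_(0 <= k <oo) (@lebesgue_measure R) (F k).
Proof. have := @outer_measure_sigma_subadditive _ _ ((wlength (@idfun R))^*)%mu F. exact. Qed.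

Lemma leb_ge0 (R : realType) (A : set R) : 0 <= (@lebesgue_measure R) A.
Proof. have := @outer_measure_ge0 _ _ ((wlength (@idfun R))^*)%mu A. exact. Qed.

Lemma outer_affine (R : realType) (a b : R) (S : set R) : (a != 0)%R ->
  lebesgue_measure [set (a * z + b)%R | z in S] <= (`|a|)%:E * lebesgue_measure S.
Proof.
move=> a0.
have pa : (0 < `|a|)%R by rewrite normr_gt0.
rewrite -(@lee_pmul2l _ (`|a|^-1)%:E) // ?lte_fin ?invr_gt0 //.
rewrite muleA -EFinM mulVf ?normr_eq0 // mul1e.
change (lebesgue_measure S) with (((wlength idfun)^*)%mu S).
rewrite measurable_realfun.outer_measure_open_itv_cover.
apply: le_ereal_inf_tmp => _ [F [Fitv SF] <-].
set g := fun z : R => (a * z + b)%R.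
pose G k := g @` F k.
have gS : [set g z | z in S] `<=` \bigcup_k G k.
  move=> _ [z Sz <-]; have [i _ Fiz] := SF z Sz; by exists i => //; exists z.
have HG k : lebesgue_measure (G k) <= `|a|%:E * wlength idfun (F k).
  have [[x y] /= Fk] := Fitv k.
  rewrite Fk wlength_itv /= lte_fin.
  have [xy|yx] := ltP x y; last first.
    rewrite mule0 (_ : G k = set0) ?measure0 //.
    apply/seteqP; split => // w [z]; rewrite Fk /= in_itv /= => /andP[h1 h2].
    by have := lt_trans h1 h2; rewrite ltNge yx.
  have [ap|an] := ltP 0%R a.
    apply: (le_trans (@leb_le R _ `](g x), (g y)[%classic _)).
      move=> w [z]; rewrite Fk /= !in_itv /= => /andP[h1 h2] <-.
      by rewrite /g !ltrD2r !ltr_pM2l // h1 h2.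
    rewrite (@lebesgue_measure_itv R (Interval (BRight (g x)) (BLeft (g y)))) /= lte_fin /g ltrD2r ltr_pM2l // xy.
    rewrite -!EFinD -EFinM lee_fin gtr0_norm //; lra.
  have an' : (a < 0)%R by rewrite lt_neqAle a0 an.
  apply: (le_trans (@leb_le R _ `](g y), (g x)[%classic _)).
    move=> w [z]; rewrite Fk /= !in_itv /= => /andP[h1 h2] <-.
    by rewrite /g !ltrD2r !ltr_nM2l // h1 h2.
  rewrite (@lebesgue_measure_itv R (Interval (BRight (g y)) (BLeft (g x)))) /= lte_fin /g ltrD2r ltr_nM2l // xy.
  rewrite -!EFinD -EFinM lee_fin ltr0_norm //; lra.
apply: (@le_trans _ _ ((`|a|^-1)%:E * \sum_(0 <= k <oo) lebesgue_measure (G k))).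
  rewrite lee_pmul2l ?lte_fin ?invr_gt0 //.
  apply: (le_trans _ (@leb_sub R G)).
  exact: leb_le.
rewrite -nneseriesZl; last by move=> i _; have := @leb_ge0 R (G i); exact.
apply: lee_nneseries.
  move=> i _ _; apply: mule_ge0; [by rewrite lee_fin invr_ge0 | exact: (@leb_ge0 R)].
move=> k _.
rewrite -[X in _ <= X](@mul1e _ (wlength idfun (F k))) -(mulVf (lt0r_neq0 pa)).
by rewrite EFinM -muleA lee_pmul2l ?lte_fin ?invr_gt0.
Qed.
Local Close Scope ereal_scope.
Section Digits.
Variable R : realType.

Lemma nat_uniq (p j : nat) (z : R) : p%:R < z -> z <= (p.+1)%:R ->
  j%:R < z -> z < (j.+1)%:R -> p = j.
Proof.
move=> h1 h2 h3 h4.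
have a : (p < j.+1)%N by rewrite -(ltr_nat R); exact: lt_le_trans h1 (ltW h4).
have b : (j < p.+1)%N by rewrite -(ltr_nat R); exact: lt_le_trans h3 h2.
by apply/eqP; rewrite eqn_leq -ltnS a -ltnS b.
Qed.

Lemma inv_lt (a y : R) : 0 < a -> 0 < y -> (1 / a < y) = (y^-1 < a).
Proof. by move=> a0 y0; rewrite div1r invf_plt ?posrE. Qed.
Lemma inv_le (a y : R) : 0 < a -> 0 < y -> (1 / a <= y) = (y^-1 <= a).
Proof. by move=> a0 y0; rewrite div1r invf_ple ?posrE. Qed.
Lemma inv_gt (a y : R) : 0 < a -> 0 < y -> (y < 1 / a) = (a < y^-1).
Proof. by move=> a0 y0; rewrite div1r invf_pgt ?posrE. Qed.

Lemma two_k (k : nat) : (0 < k)%N -> 2 * k%:R - 1 = ((2 * k).-1)%:R :> R.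
Proof.
move=> k0; have h : (2 * k)%N = (2 * k).-1.+1 by rewrite prednK // muln_gt0.
by rewrite -natrM {1}h -natr1 addrK.
Qed.

Lemma branch (y : R) (j : nat) : (0 < j)%N -> 0 < y ->
  j%:R < y^-1 < j.+1%:R ->
  sed1 y = (j + odd j)%N%:R /\
  seT y = (if odd j then j.+1%:R * y - 1 else 1 - j%:R * y).
Proof.
move=> j0 y0 /andP[zj zj1].
have k2pos (k : nat) : (0 < k)%N -> 0 < 2 * k%:R :> R.
  by move=> k0; rewrite mulr_gt0 // ltr0n.
have k2mpos (k : nat) : (0 < k)%N -> 0 < 2 * k%:R - 1 :> R.
  move=> k0; rewrite two_k // ltr0n -ltnS prednK ?muln_gt0 //.
  lia.
have k2ppos (k : nat) : 0 < 2 * k%:R + 1 :> R.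
  by rewrite ltr_wpDl // mulr_ge0.
have noodd (k : nat) : (0 < k)%N -> 1 / (2 * k%:R) <= y -> y < 1 / (2 * k%:R - 1) ->
    j = (2 * k).-1.
  move=> k0; rewrite (inv_le _ _ (k2pos k k0) y0) (inv_gt _ _ (k2mpos k k0) y0) => h1 h2.
  apply/esym/(@nat_uniq _ _ (y^-1)) => //.
    by rewrite -two_k.
  by rewrite prednK ?muln_gt0 // natrM.
have ceilE : Num.ceil (1 / y) = j.+1%:Z.
  apply: ceil_def; rewrite div1r (_ : (j.+1%:Z - 1)%R = j%:Z); last first.
    by rewrite -addn1 PoszD addrK.
  by rewrite -!pmulrn zj (ltW zj1).
have floorE : Num.floor (1 / y) = j%:Z.
  by apply: floor_def; rewrite div1r -!pmulrn (ltW zj) /= addn1 zj1.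
case: (boolP (odd j)) => oj.
- have jE : j = (2 * (j./2).+1).-1.
    by move: (odd_double_half j); rewrite oj -muln2 /= => h; lia.
  set k := (j./2).+1.
  have cond1 : 1 / (2 * k%:R) < y /\ y < 1 / (2 * k%:R - 1).
    rewrite (inv_lt _ _ (k2pos k isT) y0) (inv_gt _ _ (k2mpos k isT) y0); split.
      have -> : 2 * k%:R = j.+1%:R :> R by rewrite -natrM jE prednK // muln_gt0.
      exact: zj1.
    by rewrite two_k // -jE.
  rewrite /sed1 /seT asboolT; last first.
    by exists k; split => //; case: cond1 => c1 c2; split => //; exact: ltW.
  rewrite asboolT; last by exists k.
  by rewrite ceilE -pmulrn addn1.
- have jE : j = 2 * j./2.
    by move: (odd_double_half j); rewrite (negbTE oj) -muln2 /= => h; lia.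
  set k := j./2.
  have k0 : (0 < k)%N by rewrite /k; lia.
  rewrite /sed1 /seT asboolF; last first.
    move=> [k' [k'0 [h1 h2]]]; have := noodd k' k'0 h1 h2 => jE'.
    by move: oj; rewrite jE' -subn1 oddB ?muln_gt0 // oddM /=.
  rewrite asboolF; last first.
    move=> [k' [k'0 [h1 h2]]]; have := noodd k' k'0 (ltW h1) h2 => jE'.
    by move: oj; rewrite jE' -subn1 oddB ?muln_gt0 // oddM /=.
  rewrite asboolT; last first.
    exists k; split => //; rewrite (inv_lt _ _ (k2ppos k) y0) (inv_gt _ _ (k2pos k k0) y0); split.
      have -> : 2 * k%:R = j%:R :> R by rewrite jE natrM.
      by rewrite natr1.
    by have -> : 2 * k%:R = j%:R :> R by rewrite jE natrM.
  by rewrite floorE -pmulrn addn0.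
Qed.
Lemma tel_sum (m K N : nat) : (0 < m)%N ->
  \sum_(j < N | (m <= j <= K)%N) ((j%:R * j.+1%:R)^-1 : R) <=
  m%:R^-1 - (maxn m (minn N K.+1))%:R^-1.
Proof.
move=> m0; elim: N => [|N IH].
  by rewrite big_ord0 (_ : maxn m (minn 0 K.+1) = m) ?subrr //; lia.
rewrite big_mkcond big_ord_recr /= -big_mkcond /=.
case: ifPn => [/andP[mN NK]|cN].
  have -> : maxn m (minn N.+1 K.+1) = N.+1 by lia.
  have E : maxn m (minn N K.+1) = N by lia.
  rewrite E in IH.
  have N0 : (0 < N)%N by lia.
  apply: le_trans (lerD IH (lexx _)) _.
  have h : (N%:R * N.+1%:R)^-1 = N%:R^-1 - N.+1%:R^-1 :> R.
    have n0 : N%:R != 0 :> R by rewrite pnatr_eq0 -lt0n.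
    have n1 : N.+1%:R != 0 :> R by rewrite pnatr_eq0.
    rewrite -[N.+1%:R]natr1; field; rewrite natr1; apply/andP; split => //.
  by rewrite h addrA subrK.
rewrite addr0; apply: le_trans IH _.
rewrite lerD2l lerN2 lef_pV2 ?posrE ?ltr0n; try lia.
by rewrite ler_nat; lia.
Qed.

Lemma leb_U2 (A B : set R) :
  ((@lebesgue_measure R) (A `|` B) <= (@lebesgue_measure R) A + (@lebesgue_measure R) B)%E.
Proof. have := @outer_measureU2 _ _ ((wlength (@idfun R))^*)%mu A B. exact. Qed.

Lemma leb0 : (@lebesgue_measure R) set0 = 0%E.
Proof. exact: measure0. Qed.

Lemma leb_itv (a b : R) : 0 <= a <= b ->
  (@lebesgue_measure R) `]a, b[%classic = (b - a)%:E.
Proof.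
move=> /andP[a0 ab]; rewrite (@lebesgue_measure_itv R (Interval (BRight a) (BLeft b))) /= lte_fin.
case: ltP => // ba; have -> : b = a by apply/eqP; rewrite eq_le ab ba.
by rewrite subrr.
Qed.

Lemma ratD (x y : R) : rational x -> rational y -> rational (x + y).
Proof. by move=> [p _ <-] [q _ <-]; exists (p + q) => //; rewrite rmorphD. Qed.
Lemma ratM (x y : R) : rational x -> rational y -> rational (x * y).
Proof. by move=> [p _ <-] [q _ <-]; exists (p * q) => //; rewrite rmorphM. Qed.
Lemma ratN (x : R) : rational x -> rational (- x).
Proof. by move=> [p _ <-]; exists (- p) => //; rewrite rmorphN. Qed.
Lemma ratV (x : R) : rational x -> rational (x^-1).
Proof. by move=> [p _ <-]; exists (p^-1) => //; rewrite fmorphV. Qed.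
Lemma ratn (n : nat) : rational (n%:R : R).
Proof. by exists n%:R => //; rewrite ratr_nat. Qed.

Lemma rat1 : rational (1 : R).
Proof. by exists 1 => //; rewrite rmorph1. Qed.

Definition jx (y : R) : nat := Num.trunc y^-1.
Definition ev (j : nat) : nat := (j + odd j)%N.
Definition dg (y : R) : nat := ev (jx y).
Definition mc (j : nat) : nat := if odd j then j else j.+1.
Definition ga (j : nat) : R := if odd j then j.+1%:R^-1 else - j%:R^-1.
Definition gb (j : nat) : R := if odd j then j.+1%:R^-1 else j%:R^-1.
Definition Irr (m : nat) : set R := [set y | 0 < y < m%:R^-1 /\ irrational y].

Lemma jx_bounds (m : nat) (y : R) : (0 < m)%N -> Irr m y ->
  (m <= jx y)%N /\ (jx y)%:R < y^-1 < (jx y).+1%:R.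
Proof.
move=> m0 [/andP[y0 ym] iy].
have m0' : 0 < m%:R :> R by rewrite ltr0n.
have my : m%:R < y^-1 by rewrite -(invrK (m%:R)) ltf_pV2 ?posrE ?invr_gt0.
have zy : 0 <= y^-1 by rewrite invr_ge0 ltW.
have /andP[h1 h2] := truncn_itv zy.
split; first by rewrite /jx truncn_ge_nat // ltW.
rewrite /jx h2 andbT lt_neqAle h1 andbT; apply/negP => /eqP E.
apply: iy; rewrite -[y]invrK -E; apply: ratV; exact: ratn.
Qed.

Lemma step_mem (m : nat) (y : R) : (0 < m)%N -> Irr m y ->
  [/\ (m <= jx y)%N, Irr (mc (jx y)) (seT y) &
      y = ga (jx y) * seT y + gb (jx y)].
Proof.
move=> m0 Iy; have [mj /andP[h1 h2]] := @jx_bounds m y m0 Iy.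
case: Iy => /andP[y0 ym] iy.
set j := jx y in mj h1 h2 *.
have j0 : (0 < j)%N by apply: leq_trans mj.
have [_ ->] := @branch y j j0 y0 (introT andP (conj h1 h2)).
have jR : 0 < j%:R :> R by rewrite ltr0n.
have a1 : j%:R * y < 1.
  by move: h1; rewrite -(ltr_pM2r y0) mulVf // lt0r_neq0.
have a2 : 1 < j.+1%:R * y.
  by rewrite -[X in X < _](mulVf (lt0r_neq0 y0)) ltr_pM2r.
have yE : j.+1%:R * y = j%:R * y + y by rewrite -natr1 mulrDl mul1r.
rewrite /mc /ga /gb; case: (boolP (odd j)) => oj.
- split => //.
  + split; last first.
      move=> rz; apply: iy.
      have -> : y = (j.+1%:R * y - 1 + 1) / j.+1%:R by field.
      by apply: ratM; [apply: ratD => //; exact: rat1 | apply: ratV; exact: ratn].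
    apply/andP; split; first by rewrite subr_gt0.
    rewrite -div1r ltr_pdivlMr //; nra.
  + by field.
- split => //.
  + split; last first.
      move=> rz; apply: iy.
      have jn : j%:R != 0 :> R by rewrite lt0r_neq0.
      have -> : y = (1 - (1 - j%:R * y)) / j%:R by field.
      apply: ratM; last by apply: ratV; exact: ratn.
      by apply: ratD; [exact: rat1 | exact: ratN].
    apply/andP; split; first by rewrite subr_gt0.
    rewrite -div1r ltr_pdivlMr ?ltr0n //; nra.
  + have jn : j%:R != 0 :> R by rewrite lt0r_neq0.
    by field.
Qed.

Lemma ga_norm (j : nat) : (0 < j)%N -> `|ga j| = (ev j)%:R^-1 /\ ga j != 0.
Proof.
move=> j0; rewrite /ga /ev; case: (odd j) => /=.
  by rewrite addn1 ger0_norm ?invr_ge0 // invr_eq0 pnatr_eq0.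
by rewrite addn0 normrN ger0_norm ?invr_ge0 // oppr_eq0 invr_eq0 pnatr_eq0 -lt0n.
Qed.

Lemma gen_step (m : nat) (A : pred nat) (P : nat -> set R) : (0 < m)%N ->
  ((@lebesgue_measure R) [set y | Irr m y /\ A (dg y) /\ P (dg y) (seT y)] <=
  \sum_(0 <= j <oo) (if (m <= j)%N && A (ev j) then
     ((ev j)%:R^-1)%:E * (@lebesgue_measure R) (Irr (mc j) `&` P (ev j)) else 0))%E.
Proof.
move=> m0.
pose Q j := if (m <= j)%N && A (ev j) then
   [set ga j * z + gb j | z in Irr (mc j) `&` P (ev j)] else set0.
apply: (le_trans (@leb_le _ _ (\bigcup_j Q j) _)).
  move=> y [Iy [Ay Py]]; have [mj Iz yE] := @step_mem m y m0 Iy.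
  exists (jx y) => //; rewrite /Q mj /=; move: Ay Py; rewrite /dg => -> Py.
  by exists (seT y) => //.
apply: (le_trans (@leb_sub R Q)).
apply: lee_nneseries; first by move=> i _ _; exact: (@leb_ge0 R).
move=> j _; rewrite /Q; case: ifPn => [/andP[mj _]|_]; last by rewrite leb0.
have j0 : (0 < j)%N by apply: leq_trans mj.
have [<- gn] := @ga_norm j j0.
exact: outer_affine.
Qed.

Lemma ser_part (m K N : nat) (C : pred nat) (c : R) : (0 < m)%N -> 0 <= c ->
  (forall j, C j -> (m <= j <= K)%N) ->
  \sum_(0 <= j < N) (if C j then c / (j%:R * j.+1%:R) else 0) <=
  c * (m%:R^-1 - (maxn m (minn N K.+1))%:R^-1).
Proof.
move=> m0 c0 HC; rewrite big_mkord.
apply: (@le_trans _ _ (\sum_(j < N) (if (m <= j <= K)%N then c / (j%:R * j.+1%:R) else 0))).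
  apply: ler_sum => j _; case: ifPn => [/HC ->|_] //.
  by case: ifP => // _; rewrite divr_ge0 // mulr_ge0.
rewrite -big_mkcond /= -mulr_sumr ler_wpM2l //.
exact: tel_sum.
Qed.

Lemma ser_boundK (m K : nat) (C : pred nat) (c : R) : (0 < m)%N -> 0 <= c ->
  (forall j, C j -> (m <= j <= K)%N) ->
  (\sum_(0 <= j <oo) (if C j then c / (j%:R * j.+1%:R) else 0)%:E <=
  (c * (m%:R^-1 - (maxn m K.+1)%:R^-1))%:E)%E.
Proof.
move=> m0 c0 HC; apply: series_le_bound.
  by move=> j; rewrite lee_fin; case: ifP => // _; rewrite divr_ge0 // mulr_ge0.
move=> N; rewrite sumEFin lee_fin; apply: le_trans (@ser_part m K N C c m0 c0 HC) _.
rewrite ler_wpM2l // lerD2l lerN2 lef_pV2 ?posrE ?ltr0n; try lia.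
by rewrite ler_nat; lia.
Qed.

Lemma ser_bound_inf (m : nat) (C : pred nat) (c : R) : (0 < m)%N -> 0 <= c ->
  (forall j, C j -> (m <= j)%N) ->
  (\sum_(0 <= j <oo) (if C j then c / (j%:R * j.+1%:R) else 0)%:E <=
  (c / m%:R)%:E)%E.
Proof.
move=> m0 c0 HC; apply: series_le_bound.
  by move=> j; rewrite lee_fin; case: ifP => // _; rewrite divr_ge0 // mulr_ge0.
move=> N; rewrite sumEFin lee_fin.
pose C' := [pred j | C j && (j < N)%N].
have -> : \sum_(0 <= j < N) (if C j then c / (j%:R * j.+1%:R) else 0) =
          \sum_(0 <= j < N) (if C' j then c / (j%:R * j.+1%:R) else 0).
  by rewrite !big_mkord; apply: eq_bigr => j _; rewrite /C' /= ltn_ord andbT.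
have HC' : forall j, C' j -> (m <= j <= N)%N.
  by move=> j /andP[/HC -> /ltnW].
apply: le_trans (@ser_part m N N C' c m0 c0 HC') _.
rewrite ler_wpM2l // lerBlDr ler_wpDr // invr_ge0 ler0n.
Qed.

Fixpoint ub (n : nat) (s : R) (D : nat) (y : R) : Prop :=
  if n is n'.+1 then (s * D%:R < (dg y)%:R) \/ ub n' s (dg y) (seT y) else False.

Fixpoint lb (n : nat) (t : R) (D : nat) (y : R) : Prop :=
  if n is n'.+1 then ((dg y)%:R <= t * D%:R) /\ lb n' t (dg y) (seT y) else True.

Definition inv (D m : nat) := [/\ (0 < D)%N, (0 < m)%N, (D <= m.+1)%N & (m <= D.+1)%N].

Lemma inv_ev (j : nat) : (0 < j)%N -> inv (ev j) (mc j) /\ (ev j * mc j = j * j.+1)%N.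
Proof.
move=> j0; rewrite /inv /ev /mc; case: (odd j) => /=.
  by rewrite addn1; split; [split|rewrite mulnC]; lia.
by rewrite addn0; split; [split|]; lia.
Qed.

Lemma Irr_sub (m : nat) : Irr m `<=` `]0, m%:R^-1[%classic.
Proof. by move=> y [/andP[y0 ym] _] /=; rewrite in_itv /= y0 ym. Qed.

Lemma ev_le (j : nat) : (j <= ev j <= j.+1)%N.
Proof. by rewrite /ev; case: (odd j) => /=; lia. Qed.

Lemma term_eq (j : nat) (c : R) : (0 < j)%N ->
  ((ev j)%:R^-1 * (c / (mc j)%:R)) = c / (j%:R * j.+1%:R).
Proof.
move=> j0; have [_ E] := @inv_ev j j0.
rewrite -natrM -E natrM invfM mulrCA mulrA; congr (_ * _).
Qed.

Lemma ub_bound (s : R) : 2 <= s -> forall n D m, inv D m ->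
  ((@lebesgue_measure R) [set y | Irr m y /\ ub n s D y] <=
   ((4 * n%:R) / (s * m%:R))%:E)%E.
Proof.
move=> s2; elim=> [|n IH] D m [D0 m0 Dm mD].
  rewrite (_ : [set y | Irr m y /\ ub 0 s D y] = set0); last first.
    by apply/seteqP; split => // y [].
  by rewrite leb0 lee_fin mulr0 mul0r.
have s0 : 0 < s by apply: lt_le_trans s2; rewrite ltr0n.
have m0' : 0 < m%:R :> R by rewrite ltr0n.
have D1 : 1 <= D%:R :> R by rewrite ler1n.
have p : 0 < s * D%:R - 1 by rewrite subr_gt0; nra.
set S1 := [set y | Irr m y /\ s * D%:R < (dg y)%:R].
set S2 := [set y | Irr m y /\ (fun _ : nat => true) (dg y) /\
                  (fun e => ub n s e) (dg y) (seT y)].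
apply: (le_trans (@leb_le _ _ (S1 `|` S2) _)).
  by move=> y [Iy [h|h]]; [left|right].
apply: (le_trans (leb_U2 _ _)).
have -> : ((4 * n.+1%:R) / (s * m%:R)) = 4 / (s * m%:R) + (4 * n%:R) / (s * m%:R).
  by rewrite -natr1; field; rewrite (lt0r_neq0 m0') (lt0r_neq0 s0).
rewrite EFinD leeD //.
  apply: (le_trans (@leb_le _ _ `]0, (s * D%:R - 1)^-1[%classic _)).
    move=> y [Iy h]; have [mj /andP[h1 h2]] := @jx_bounds m y m0 Iy.
    have [/andP[y0 _] _] := Iy.
    rewrite /= in_itv /= y0 /=.
    have e1 : (dg y)%:R <= (jx y).+1%:R :> R by rewrite ler_nat; case/andP: (ev_le (jx y)).
    have e2 : s * D%:R - 1 < y^-1.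
      rewrite ltrBlDr; apply: lt_le_trans h _; apply: le_trans e1 _.
      by rewrite -natr1 lerD2r ltW.
    by rewrite -(invrK y) ltf_pV2 ?posrE ?invr_gt0.
  rewrite leb_itv; last by rewrite lexx invr_ge0 ltW.
  rewrite subr0 lee_fin.
  have mD' : m%:R <= D%:R + 1 :> R by rewrite natr1 ler_nat.
  have -> : 4 / (s * m%:R) = (s * m%:R / 4)^-1 by rewrite invf_div.
  rewrite lef_pV2 ?posrE ?divr_gt0 ?mulr_gt0 //; nra.
apply: (le_trans (@gen_step m (fun _ => true) (fun e => ub n s e) m0)).
apply: (le_trans (y := (\sum_(0 <= j <oo) (if (m <= j)%N then
    (4 * n%:R / s) / (j%:R * j.+1%:R) else 0)%:E)%E)).
  apply: lee_nneseries.
    move=> j _ _; case: ifP => // _; apply: mule_ge0; first by rewrite lee_fin invr_ge0.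
    exact: (@leb_ge0 R).
  move=> j _; rewrite andbT; case: ifPn => // mj.
  have j0 : (0 < j)%N by apply: leq_trans mj.
  have [iv _] := @inv_ev j j0.
  apply: (le_trans (y := ((ev j)%:R^-1)%:E * ((4 * n%:R) / (s * (mc j)%:R))%:E)%E).
    apply: lee_wpmul2l; first by rewrite lee_fin invr_ge0.
    apply: (le_trans _ (IH _ _ iv)); apply: leb_le; by move=> y [].
  rewrite -EFinM lee_fin.
  have -> : 4 * n%:R / (s * (mc j)%:R) = (4 * n%:R / s) / (mc j)%:R by rewrite invfM mulrA.
  by rewrite (@term_eq j (4 * n%:R / s) j0).
apply: (le_trans (@ser_bound_inf m (fun j => (m <= j)%N) (4 * n%:R / s) m0 _ _)) => //.
  by rewrite divr_ge0 // ?mulr_ge0 // ?ler0n // ltW.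
by rewrite lee_fin invfM mulrA.
Qed.

Lemma lb_bound (t : R) : 1 <= t -> forall n D m, inv D m ->
  ((@lebesgue_measure R) [set y | Irr m y /\ lb n t D y] <=
   ((1 - (4 * t)^-1) ^+ n / m%:R)%:E)%E.
Proof.
move=> t1; have t0 : 0 < t by apply: lt_le_trans t1.
have q0 : 0 <= 1 - (4 * t)^-1.
  rewrite subr_ge0 invf_le1 ?mulr_gt0 //; nra.
elim=> [|n IH] D m [D0 m0 Dm mD].
  have m0' : 0 < m%:R :> R by rewrite ltr0n.
  apply: (le_trans (@leb_le _ _ `]0, m%:R^-1[%classic _)).
    by move=> y [Iy _]; exact: Irr_sub.
  by rewrite leb_itv ?lexx ?invr_ge0 ?ler0n // subr0 expr0 div1r.
have m0' : 0 < m%:R :> R by rewrite ltr0n.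
apply: (le_trans (@gen_step m (fun e => (e%:R <= t * D%:R)) (fun e => lb n t e) m0)).
set K := Num.trunc (t * D%:R).
apply: (le_trans (y := (\sum_(0 <= j <oo) (if (m <= j)%N && ((ev j)%:R <= t * D%:R) then
    ((1 - (4 * t)^-1) ^+ n) / (j%:R * j.+1%:R) else 0)%:E)%E)).
  apply: lee_nneseries.
    move=> j _ _; case: ifP => // _; apply: mule_ge0; first by rewrite lee_fin invr_ge0.
    exact: (@leb_ge0 R).
  move=> j _; case: ifPn => // /andP[mj _].
  have j0 : (0 < j)%N by apply: leq_trans mj.
  have [iv _] := @inv_ev j j0.
  apply: (le_trans (y := ((ev j)%:R^-1)%:E * (((1 - (4 * t)^-1) ^+ n) / (mc j)%:R)%:E)%E).
    apply: lee_wpmul2l; first by rewrite lee_fin invr_ge0.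
    apply: (le_trans _ (IH _ _ iv)); apply: leb_le; by move=> y [].
  by rewrite -EFinM lee_fin (@term_eq j _ j0).
have tD0 : 0 <= t * D%:R by rewrite mulr_ge0 // ltW.
apply: (le_trans (@ser_boundK m K _ _ m0 _ _)).
- exact: exprn_ge0.
- move=> j /andP[-> h] /=; rewrite /K truncn_ge_nat //.
  apply: le_trans h; rewrite ler_nat; by case/andP: (ev_le j).
rewrite lee_fin exprS [_ * _ ^+ n]mulrC -mulrA ler_wpM2l ?exprn_ge0 //.
have Kt : K%:R <= t * D%:R by have /andP[] := truncn_itv tD0.
have DmR : D%:R <= m%:R + 1 :> R by rewrite natr1 ler_nat.
have D1 : 1 <= D%:R :> R by rewrite ler1n.
have m1 : 1 <= m%:R :> R by rewrite ler1n.
have HM : (maxn m K.+1)%:R <= 4 * t * m%:R.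
  have [->|->] : maxn m K.+1 = m \/ maxn m K.+1 = K.+1 by lia.
    nra.
  rewrite -natr1; nra.
have M0 : 0 < (maxn m K.+1)%:R :> R by rewrite ltr0n; lia.
have -> : (1 - (4 * t)^-1) / m%:R = m%:R^-1 - (4 * t * m%:R)^-1.
  by field; rewrite (lt0r_neq0 t0) (lt0r_neq0 m0').
rewrite lerD2l lerN2 lef_pV2 ?posrE ?mulr_gt0 //.
Qed.

Lemma Irr_mono (m : nat) (y : R) : (0 < m)%N -> Irr m y -> Irr 1 y.
Proof.
move=> m0 [/andP[y0 ym] iy]; split => //; rewrite y0 /= invr1.
apply: lt_le_trans ym _; rewrite invf_le1 ?ltr0n // ler1n //.
Qed.

Lemma Irr_seT (y : R) : Irr 1 y -> Irr 1 (seT y).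
Proof.
move=> Iy; have [mj Iz _] := @step_mem 1 y isT Iy.
apply: (@Irr_mono (mc (jx y))) => //.
by rewrite /mc; case: ifP => _ //; apply: leq_trans mj.
Qed.

Lemma orbit_irr (x : R) (i : nat) : Irr 1 x -> Irr 1 (iter i (@seT R) x).
Proof. by move=> Ix; elim: i => [|i IH] //=; exact: Irr_seT. Qed.

Lemma sed1_dg (y : R) : Irr 1 y -> sed1 y = (dg y)%:R.
Proof.
move=> Iy; have [mj hb] := @jx_bounds 1 y isT Iy.
have [y0 _] := andP (proj1 Iy).
by have [-> _] := @branch y (jx y) mj y0 hb.
Qed.

Lemma dg_pos (y : R) : Irr 1 y -> (0 < dg y)%N.
Proof.
move=> Iy; have [mj _] := @jx_bounds 1 y isT Iy.
by rewrite /dg /ev; apply: leq_trans mj _; rewrite leq_addr.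
Qed.

Definition Dg (x : R) (i : nat) : nat := if i is i'.+1 then dg (iter i' (@seT R) x) else 1%N.

Lemma Dg_pos (x : R) (i : nat) : Irr 1 x -> (0 < Dg x i)%N.
Proof. by move=> Ix; case: i => //= i; apply: dg_pos; exact: orbit_irr. Qed.

Lemma seR_Dg (x : R) (k : nat) : Irr 1 x -> (0 < k)%N ->
  seR k x = (Dg x k)%:R / (Dg x k.-1)%:R.
Proof.
move=> Ix; case: k => // k _; rewrite /seR /sed.
case: k => [|k] /=; first by rewrite divr1 (@sed1_dg x Ix).
have I1 := @orbit_irr x k Ix; have I2 := @orbit_irr x k.+1 Ix.
by rewrite (@sed1_dg _ I1) (@sed1_dg _ I2).
Qed.

Lemma ub_Dg (x : R) (s : R) (n i : nat) :
  (exists k, (i < k <= i + n)%N /\ s * (Dg x k.-1)%:R < (Dg x k)%:R) ->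
  ub n s (Dg x i) (iter i (@seT R) x).
Proof.
elim: n i => [|n IH] i [k [/andP[ik kn] h]].
  by exfalso; move: ik kn; rewrite addn0; lia.
rewrite /=; have [ek|ki] := eqVneq k i.+1; first by left; move: h; rewrite ek.
right; rewrite -iterS -[dg _]/(Dg x i.+1); apply: IH.
by exists k; split => //; apply/andP; split; lia.
Qed.

Lemma lb_Dg (x : R) (t : R) (n i : nat) : ~ lb n t (Dg x i) (iter i (@seT R) x) ->
  exists k, (i < k <= i + n)%N /\ t * (Dg x k.-1)%:R < (Dg x k)%:R.
Proof.
elim: n i => [|n IH] i /=; first by [].
case: (boolP ((dg (iter i (@seT R) x))%:R <= t * (Dg x i)%:R)) => h H.
  have H' : ~ lb n t (Dg x i.+1) (iter i.+1 (@seT R) x).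
    by move=> L; apply: H; split.
  have [k [/andP[k1 k2] hk]] := IH i.+1 H'.
  by exists k; split => //; apply/andP; split; lia.
by exists i.+1; split; [apply/andP; split; lia | rewrite ltNge].
Qed.

Lemma seM_le (x : R) (n : nat) (s : R) : 0 <= s ->
  (forall k, (0 < k <= n)%N -> seR k x <= s) -> seM n x <= s.
Proof.
move=> s0 H; rewrite /seM big_seq_cond; apply: bigmax_le => // k /andP[kin _].
by apply: H; rewrite mem_index_iota in kin; lia.
Qed.

Lemma seM_ge (x : R) (n k : nat) : (0 < k <= n)%N -> seR k x <= seM n x.
Proof.
move=> kn; rewrite /seM; apply: (@le_bigmax_seq _ _ _ _ _ k xpredT) => //.
by rewrite mem_index_iota; lia.
Qed.

Lemma M_upper (x : R) (N n : nat) (s : R) : Irr 1 x -> 0 <= s -> (n <= N)%N ->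
  ~ ub N s 1 x -> seM n x <= s.
Proof.
move=> Ix s0 nN H; apply: seM_le => // k /andP[k0 kn].
rewrite leNgt; apply/negP => hk; apply: H.
have := @ub_Dg x s N 0; rewrite /=; apply.
exists k; split; first by apply/andP; split; lia.
have p : 0 < (Dg x k.-1)%:R :> R by rewrite ltr0n; exact: Dg_pos.
by move: hk; rewrite (@seR_Dg x k Ix k0) ltr_pdivlMr.
Qed.

Lemma M_lower (x : R) (N n : nat) (t : R) : Irr 1 x -> (N <= n)%N ->
  ~ lb N t 1 x -> t < seM n x.
Proof.
move=> Ix Nn H; have [k [/andP[k0 kN] hk]] := @lb_Dg x t N 0 H.
have hk2 : (0 < k <= n)%N by apply/andP; split; lia.
apply: (lt_le_trans _ (@seM_ge x n k hk2)).
have p : 0 < (Dg x k.-1)%:R :> R by rewrite ltr0n; exact: Dg_pos.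
by rewrite (@seR_Dg x k Ix k0) ltr_pdivlMr.
Qed.

Lemma pow_bound (a : R) (N : nat) : 0 <= a <= 1 -> (1 - a) ^+ N * (1 + N%:R * a) <= 1.
Proof.
move=> /andP[a0 a1]; elim: N => [|N IH]; first by rewrite expr0 mul0r addr0 mulr1.
have p : 0 <= (1 - a) ^+ N by rewrite exprn_ge0 // subr_ge0.
apply: le_trans IH; rewrite exprS [(1 - a) * _]mulrC -mulrA ler_wpM2l //.
have N0 : 0 <= N%:R :> R by rewrite ler0n.
rewrite -natr1; nra.
Qed.

Lemma geo_part (N : nat) : \sum_(0 <= k < N) ((2 ^ k)%:R^-1 : R) <= 2 - 2 / (2 ^ N)%:R.
Proof.
elim: N => [|N IH]; first by rewrite big_geq // expn0 divr1 subrr.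
rewrite big_nat_recr //= (le_trans (lerD IH (lexx _))) //.
have p : 0 < (2 ^ N)%:R :> R by rewrite ltr0n expn_gt0.
rewrite expnS natrM; rewrite -addrA lerD2l.
have -> : 2 / (2 * (2 ^ N)%:R) = (2 ^ N)%:R^-1 :> R.
  by field; rewrite lt0r_neq0.
lra.
Qed.

Lemma frac_le (X Y Z U : nat) : (0 < Y)%N -> (0 < U)%N -> (X * U <= Z * Y)%N ->
  X%:R / Y%:R <= Z%:R / U%:R :> R.
Proof.
move=> Y0 U0 h; rewrite ler_pdivrMr ?ltr0n // mulrAC ler_pdivlMr ?ltr0n //.
by rewrite -!natrM ler_nat.
Qed.

Definition V (q j : nat) : set R :=
  [set x | Irr 1 x /\ ub (2 ^ (q.+1 * j.+1)) (2 ^ (q.+2 * j.+1))%:R 1 x].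
Definition W (q j : nat) : set R :=
  [set x | Irr 1 x /\ lb (2 ^ (q.+1 * j)) (2 ^ (q * j.+1))%:R 1 x].

Lemma inv11 : inv 1 1. Proof. by []. Qed.

Lemma V_bound (q j : nat) :
  ((@lebesgue_measure R) (V q j) <= ((2 ^ q.+2)%:R / (2 ^ j)%:R)%:E)%E.
Proof.
have s2 : 2 <= (2 ^ (q.+2 * j.+1))%:R :> R.
  rewrite -[2]/(2%:R) ler_nat -[X in (X <= _)%N]expn1 leq_pexp2l //; lia.
apply: (le_trans (@ub_bound _ s2 _ 1 1 inv11)).
rewrite lee_fin mulr1 -[4]/(4%:R) -natrM; apply: frac_le; rewrite ?expn_gt0 //.
rewrite -[4%N]/(2 ^ 2)%N -!expnD leq_pexp2l //; nia.
Qed.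

Lemma W_bound (q j : nat) :
  ((@lebesgue_measure R) (W q j) <= ((2 ^ q.+2)%:R / (2 ^ j)%:R)%:E)%E.
Proof.
set t : R := (2 ^ (q * j.+1))%:R.
have t1 : 1 <= t by rewrite ler1n expn_gt0.
apply: (le_trans (@lb_bound _ t1 _ 1 1 inv11)).
rewrite lee_fin divr1.
set N := (2 ^ (q.+1 * j))%N.
set a := (4 * t)^-1.
have t0 : 0 < t by apply: lt_le_trans t1.
have a0 : 0 < a by rewrite invr_gt0 mulr_gt0.
have a1 : a <= 1 by rewrite invf_le1 ?mulr_gt0 //; nra.
have N0 : 0 < N%:R :> R by rewrite ltr0n expn_gt0.
have := @pow_bound a N (introT andP (conj (ltW a0) a1)).
have p : 0 < 1 + N%:R * a by apply: addr_gt0 => //; exact: mulr_gt0.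
rewrite -ler_pdivlMr // mul1r => h; apply: (le_trans h).
apply: (@le_trans _ _ (N%:R * a)^-1).
  by rewrite lef_pV2 ?posrE ?mulr_gt0 // lerDr.
rewrite invfM /a invrK /t -[4]/(4%:R) -natrM mulrC.
apply: frac_le; rewrite ?expn_gt0 //.
rewrite /N -[4%N]/(2 ^ 2)%N -!expnD leq_pexp2l //; nia.
Qed.

Definition B (q : nat) : set R :=
  [set x | forall J, exists j, (J <= j)%N /\ (V q j x \/ W q j x)].

Lemma B_null (q : nat) : (@lebesgue_measure R) (B q) = 0%E.
Proof.
set c : R := (2 ^ q.+2)%:R.
have c0 : 0 <= c by rewrite ler0n.
have HJ J : ((@lebesgue_measure R) (B q) <= ((4 * c) / (2 ^ J)%:R)%:E)%E.
  apply: (le_trans (@leb_le _ _ (\bigcup_k (V q (J + k) `|` W q (J + k))) _)).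
    move=> x Bx; have [j [Jj h]] := Bx J; exists (j - J)%N => //; rewrite subnKC //.
  apply: (le_trans (@leb_sub R _)).
  apply: (le_trans (y := (\sum_(0 <= k <oo) ((2 * c) / (2 ^ (J + k))%:R)%:E)%E)).
    apply: lee_nneseries; first by move=> i _ _; exact: (@leb_ge0 R).
    move=> k _; apply: (le_trans (leb_U2 _ _)).
    have -> : 2 * c / (2 ^ (J + k))%:R = c / (2 ^ (J + k))%:R + c / (2 ^ (J + k))%:R by lra.
    by rewrite EFinD leeD // ?V_bound ?W_bound.
  apply: series_le_bound.
    by move=> k; rewrite lee_fin divr_ge0 ?mulr_ge0 ?ler0n.
  move=> N; rewrite sumEFin lee_fin.
  have -> : \sum_(0 <= k < N) (2 * c / (2 ^ (J + k))%:R) =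
            (2 * c / (2 ^ J)%:R) * \sum_(0 <= k < N) ((2 ^ k)%:R^-1 : R).
    rewrite mulr_sumr; apply: eq_bigr => k _.
    by rewrite expnD natrM invfM mulrA.
  have -> : 4 * c / (2 ^ J)%:R = (2 * c / (2 ^ J)%:R) * 2.
    by field; rewrite lt0r_neq0 // ltr0n expn_gt0.
  rewrite ler_wpM2l ?divr_ge0 ?mulr_ge0 ?ler0n //.
  apply: (le_trans (geo_part N)); rewrite lerBlDr lerDl divr_ge0 // ler0n.
apply/eqP; rewrite eq_le leb_ge0 andbT.
apply/lee_addgt0Pr => e e0; rewrite add0e.
set J := (Num.trunc (4 * c / e)).+1.
apply: (le_trans (HJ J)); rewrite lee_fin.
have e' : 4 * c / e < J%:R by exact: truncnS_gt.
have JJ : J%:R <= (2 ^ J)%:R :> R by rewrite ler_nat ltnW // ltn_expl.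
have P : 0 < (2 ^ J)%:R :> R by rewrite ltr0n expn_gt0.
rewrite ler_pdivrMr // mulrC -ler_pdivrMr //.
apply: ltW; rewrite ltr_pdivrMr //; move: e'; rewrite ltr_pdivrMr // => h; nra.
Qed.

Lemma final_ineq (a b L e : R) (q j : nat) : 0 < L -> 0 < e -> (q.+1 <= j)%N ->
  3 / e < q.+1%:R ->
  (q * j.+1)%:R * L < a -> a <= (q.+2 * j.+1)%:R * L ->
  (q.+1 * j)%:R * L <= b -> b < (q.+1 * j.+1)%:R * L ->
  `|1 - a / b| < e.
Proof.
move=> L0 e0 qj he h1 h2 h3 h4.
rewrite !natrM in h1 h2 h3 h4.
set P := q.+1%:R in he h3 h4; set Q := q%:R in h1.
have PQ : P = Q + 1 by rewrite /P /Q -natr1.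
set J := j%:R in h3.
have J1 : j.+1%:R = J + 1 by rewrite /J -natr1.
rewrite J1 in h1 h2 h4.
have P1 : 1 <= P by rewrite /P ler1n.
have JP : P <= J by rewrite /P /J ler_nat.
have Q0 : 0 <= Q by rewrite /Q ler0n.
have eP : 3 < e * P by move: he; rewrite ltr_pdivrMr // mulrC.
have q2 : q.+2%:R = P + 1 by rewrite /P -natr1.
rewrite q2 in h2.
have w0 : 0 < (J + 1) * L by rewrite mulr_gt0 // ltr_wpDl // /J ler0n.
set w := (J + 1) * L in w0.
have JL0 : 0 < J * L by rewrite mulr_gt0 // (lt_le_trans _ JP) // (lt_le_trans _ P1).
have b0 : 0 < b by apply: lt_le_trans h3; rewrite -mulrA mulr_gt0 // (lt_le_trans _ P1).
rewrite ltr_norml; apply/andP; split.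
- suff : a / b < 1 + e by lra.
  rewrite ltr_pdivrMr //.
  apply: (le_lt_trans (y := (P + 1) * (J + 1) * L)) => //.
  apply: (le_lt_trans (y := (P + 3) * (J * L))).
    have -> : (P + 1) * (J + 1) * L = (P + 3) * (J * L) - (2 * J - P - 1) * L by ring.
    rewrite lerBlDr lerDl; apply: mulr_ge0; [lra | exact: ltW].
  apply: (lt_le_trans (y := (1 + e) * (P * (J * L)))).
    have -> : (1 + e) * (P * (J * L)) = (P + e * P) * (J * L) by ring.
    rewrite ltr_pM2r //; lra.
  by rewrite ler_wpM2l ?mulrA // addr_ge0 // ltW.
- suff : 1 - e < a / b by lra.
  rewrite ltr_pdivlMr //.
  have a0 : 0 <= a.
    apply: ltW; apply: le_lt_trans h1; apply: mulr_ge0; [apply: mulr_ge0 => //; lra | exact: ltW].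
  have [e1|e1] := leP e 1; last first.
    apply: (lt_le_trans (y := 0)) => //; rewrite pmulr_llt0 //; lra.
  have h4' : b < P * w by rewrite /w mulrA.
  have h1' : Q * w < a by rewrite /w mulrA.
  apply: (le_lt_trans (y := (1 - e) * (P * w))).
    by rewrite ler_wpM2l ?subr_ge0 // ltW.
  apply: le_lt_trans h1'.
  have -> : (1 - e) * (P * w) = (P - e * P) * w by ring.
  rewrite ler_pM2r //; lra.
Qed.

Lemma lnpow (k : nat) : ln ((2 ^ k)%:R : R) = k%:R * ln 2.
Proof. by rewrite natrX lnXn // mulr_natl. Qed.

Lemma good_conv (x : R) : Irr 1 x -> (forall q, ~ B q x) ->
  (fun n : nat => ln (seM n x) / ln (n%:R : R)) @ \oo --> (1 : R).
Proof.
move=> Ix NB; apply/cvgrPdist_lt => e e0.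
set q := Num.trunc (3 / e).
have he : 3 / e < q.+1%:R by exact: truncnS_gt.
have [J HJ] : exists J, forall j, (J <= j)%N -> ~ V q j x /\ ~ W q j x.
  have := NB q; rewrite /B => /existsNP [J HJ]; exists J => j Jj.
  by split => h; apply: HJ; exists j; split => //; [left|right].
set J' := maxn J q.+1.
exists (2 ^ (q.+1 * J'))%N => // n /= Hn.
have p1 : (1 < 2 ^ q.+1)%N by rewrite -{1}(expn0 2) ltn_exp2l.
have n0 : (0 < n)%N by apply: leq_trans Hn; rewrite expn_gt0.
set j := trunc_log (2 ^ q.+1) n.
have hj1 : (2 ^ (q.+1 * j) <= n)%N by rewrite expnM; exact: trunc_logP.
have hj2 : (n < 2 ^ (q.+1 * j.+1))%N by rewrite expnM; exact: trunc_log_ltn.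
have Jj : (J' <= j)%N by apply: trunc_log_max => //; rewrite -expnM.
have [nV nW] := HJ j (leq_trans (leq_maxl _ _) Jj).
have qj : (q.+1 <= j)%N by apply: leq_trans (leq_maxr _ _) Jj.
have Mu : seM n x <= (2 ^ (q.+2 * j.+1))%:R.
  by apply: (@M_upper x (2 ^ (q.+1 * j.+1))) => //; [exact: ltnW | move=> h; apply: nV].
have Ml : (2 ^ (q * j.+1))%:R < seM n x.
  by apply: (@M_lower x (2 ^ (q.+1 * j))) => // h; apply: nW.
have L0 : 0 < ln (2 : R) by apply: ln_gt0; lra.
have t0 : 0 < (2 ^ (q * j.+1))%:R :> R by rewrite ltr0n expn_gt0.
have M0 : 0 < seM n x by apply: lt_trans Ml.
have n0' : 0 < n%:R :> R by rewrite ltr0n.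
apply: (@final_ineq _ _ (ln 2) e q j) => //.
- by rewrite -lnpow ltr_ln ?posrE.
- by rewrite -lnpow ler_ln ?posrE ?ltr0n ?expn_gt0.
- by rewrite -lnpow ler_ln ?posrE ?ltr0n ?expn_gt0 // ler_nat.
- by rewrite -lnpow ltr_ln ?posrE ?ltr0n ?expn_gt0 // ltr_nat.
Qed.
End Digits.

Theorem corollary1p9 (R : realType) :
  {ae (@lebesgue_measure R), forall x : R,
     0 < x < 1 -> @irrational R x ->
     (fun n : nat => ln (seM n x) / ln (n%:R : R)) @ \oo --> (1 : R)}.
Proof.
have N : (@lebesgue_measure R).-negligible (\bigcup_q @B R q).
  apply/negligible_outer_measure.
  change ((@lebesgue_measure R) (\bigcup_q @B R q) = 0%E).
  apply/eqP; rewrite eq_le leb_ge0 andbT.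
  apply: (le_trans (@leb_sub R _)).
  rewrite eseries0; first by [].
  by move=> q _ _; rewrite B_null.
apply: (negligibleS _ N) => x /= H.
apply: contrapT => nB; apply: H => /andP[x0 x1] ix.
apply: good_conv; first by split; [rewrite invr1 x0 x1 | exact: ix].
by move=> q Bq; apply: nB; exists q.
Qed.
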